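(* Let $n\ge 1$, $m\ge 2$, $0\le k\le n-1$, and let $\overline{\mathcal{C}}^k_{ac}$ be the class of all complete and all incomplete acyclic $k$-bounded CP-nets over $n$ variables with $m$ values each, over the instance space $\overline{\mathcal{X}}_{swap}$. Then: (1) $\mathrm{VCD}(\overline{\mathcal{C}}^{n-1}_{ac})=m^n-1$; (2) $\mathrm{VCD}(\overline{\mathcal{C}}^{0}_{ac})=(m-1)n$; (3) $\mathrm{VCD}(\overline{\mathcal{C}}^{k}_{ac})\ge(m-1)\mathcal{M}_k=(m-1)(n-k)m^k+m^k-1$.
   Context: Variables $V=\{v_1,\dots,v_n\}$, each with a finite domain of size $m$. An outcome assigns a value to every variable; $\mathcal{O}_X$ denotes assignments to $X\subseteq V$. A CP-net specifies for each $v_i$ a parent set $Pa(v_i)\subseteq V\setminus\{v_i\}$ and, for each context $\gamma\in\mathcal{O}_{Pa(v_i)}$, either a strict total order $\succ^{v_i}_\gamma$ on $D_{v_i}$ or nothing (complete if always given, incomplete otherwise); parents are non-dummy. Acyclic: parent graph (edges $(v_j,v_i)$, $v_j\in Pa(v_i)$) acyclic; $k$-bounded: all $|Pa(v_i)|\le k$. Improving flip from $o$ to $o'$ (differing only in $v_i$): $\succ^{v_i}_{o[Pa(v_i)]}$ is given and $o'[v_i]\succ^{v_i}_{o[Pa(v_i)]}o[v_i]$; $o'\succ o$ iff a nonempty sequence of improving flips leads from $o$ to $o'$. $\overline{\mathcal{X}}_{swap}$ is the set of all ordered pairs $x=(x.1,x.2)$ of outcomes differing in exactly one variable; a CP-net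 $N$ is the concept $c_N(x)=1$ iff $x.1\succ x.2$ under $N$. VCD is the largest size of a set on which all labelings are realized by the class. $\mathcal{M}_k=(n-k)m^k+\frac{m^k-1}{m-1}$. *)

(* Defs.v *)
From mathcomp Require Import all_boot.
Set Implicit Arguments. Unset Strict Implicit. Unset Printing Implicit Defensive.

Definition outcome (n m : nat) := {ffun 'I_n -> 'I_m}.

(* A binary relation on the domain 'I_m, stored as a finite function so that
   equality of CPT entries is decidable/extensional. *)
Definition domrel (m : nat) := {ffun 'I_m * 'I_m -> bool}.

Definition strict_total m (r : domrel m) : Prop :=
  [/\ forall x, ~~ r (x, x),
      forall x y z, r (x, y) -> r (y, z) -> r (x, z)
    & forall x y, x != y -> r (x, y) || r (y, x)].

(* The CPT of v_i is given as a function of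
   the whole outcome, required (in [wf_cpnet]) to depend only on the values of
   the parents, i.e. it is a function of the context in O_{Pa(v_i)}.
   [None] means no order is given for that context (incomplete CP-net). *)
Record cpnet (n m : nat) := CPNet {
  Pa  : 'I_n -> {set 'I_n};
  cpt : 'I_n -> outcome n m -> option (domrel m) }.

Definition wf_cpnet n m (N : cpnet n m) : Prop :=
  [/\ forall i, i \notin Pa N i,
      forall i (o o' : outcome n m),
        (forall j, j \in Pa N i -> o j = o' j) -> cpt N i o = cpt N i o',
      forall i o r, cpt N i o = Some r -> strict_total r
    &
      forall i j, j \in Pa N i -> exists (o o' : outcome n m),
        (forall l, l != j -> o l = o' l) /\ cpt N i o <> cpt N i o'].

Definition pa_edge n m (N : cpnet n m) : rel 'I_n := fun j i => j \in Pa N i.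

Definition acyclic n m (N : cpnet n m) : Prop :=
  forall i j, pa_edge N j i -> ~~ connect (pa_edge N) i j.

Definition kbounded n m (k : nat) (N : cpnet n m) : Prop :=
  forall i, #|Pa N i| <= k.

Definition acyclic_kbounded n m k (N : cpnet n m) : Prop :=
  [/\ wf_cpnet N, acyclic N & kbounded k N].

Definition iflip n m (N : cpnet n m) : rel (outcome n m) := fun o o' =>
  [exists i, [forall l, (l != i) ==> (o l == o' l)] && (o i != o' i) &&
     match cpt N i o with Some r => r (o' i, o i) | None => false end].

Definition prefers n m (N : cpnet n m) (o' o : outcome n m) : bool :=
  [exists o1, iflip N o o1 && connect (iflip N) o1 o'].

Definition is_swap n m (x : outcome n m * outcome n m) : bool :=
  #|[set i | x.1 i != x.2 i]| == 1.

Definition concept n m (N : cpnet n m) (x : outcome n m * outcome n m) : bool :=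
  prefers N x.1 x.2.

Definition shattered n m (C : cpnet n m -> Prop)
    (S : {set outcome n m * outcome n m}) : Prop :=
  {subset S <= is_swap (m:=m)} /\
  forall T : {set outcome n m * outcome n m}, T \subset S ->
    exists N, C N /\ forall x, x \in S -> concept N x = (x \in T).

Definition VCD_is n m (C : cpnet n m -> Prop) (d : nat) : Prop :=
  (exists S, shattered C S /\ #|S| = d) /\
  (forall S, shattered C S -> #|S| <= d).

Definition VCD_ge n m (C : cpnet n m -> Prop) (d : nat) : Prop :=
  exists S, shattered C S /\ d <= #|S|.

Definition Mk (n m k : nat) : nat := (n - k) * m ^ k + (m ^ k - 1) %/ (m - 1).

(* Main.v *)
Require Import Defs.
From mathcomp Require Import all_boot all_order all_algebra.
From mathcomp Require Import zify.
Set Implicit Arguments. Unset Strict Implicit. Unset Printing Implicit Defensive.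
Import Order.TTheory GRing.Theory Num.Theory.

(* Proof outline:
   - concept_swap: on swap pairs, the preference of an acyclic CP-net is the
     CPT comparison in the parent context;
   - upper bounds via linear dependence of the vectors e_{x.1} - e_{x.2}
     (resp. their per-variable projections) for shattered sets;
   - lower bound via an explicit shattered set and explicit nets. *)
Section ST.
Variable m : nat.
Variable r : domrel m.
Hypothesis hr : strict_total r.

Lemma st_irr x : ~~ r (x, x). Proof. by case: hr. Qed.
Lemma st_trans x y z : r (x, y) -> r (y, z) -> r (x, z). Proof. by case: hr => _ H _; apply: H. Qed.
Lemma st_tot x y : x != y -> r (x, y) || r (y, x). Proof. by case: hr => _ _ H; apply: H. Qed.
Lemma st_asym x y : r (x, y) -> ~~ r (y, x).
Proof. move=> h; apply/negP => h'; by move: (st_irr x); rewrite (st_trans h h'). Qed.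
Lemma st_neq x y : r (x, y) -> x != y.
Proof. by move=> h; apply/eqP => e; move: h; rewrite e (negbTE (st_irr y)). Qed.

Definition rk x := #|[set y | r (x, y)]|.
Lemma rk_lt x y : r (x, y) -> rk y < rk x.
Proof.
move=> h; apply: proper_card; apply/properP; split.
  by apply/subsetP => z; rewrite !inE => /(st_trans h).
by exists y; rewrite !inE // st_irr.
Qed.
End ST.

Section Concept.
Variables n m : nat.
Variable N : cpnet n m.
Hypothesis wfN : wf_cpnet N.
Hypothesis acN : acyclic N.

Definition relw (w : 'I_n) (b : outcome n m) (a c : 'I_m) :=
  (a == c) || (if cpt N w b is Some R then R (a, c) else false).

Lemma relw_trans w b a c d : relw w b a c -> relw w b c d -> relw w b a d.
Proof.
rewrite /relw; case E: (cpt N w b) => [R|]; last by rewrite !orbF => /eqP -> .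
case: wfN => _ _ hst _; have hR := hst _ _ _ E.
case/orP=> [/eqP -> //|h1]; case/orP=> [/eqP <- |h2]; first by rewrite h1 orbT.
by rewrite (st_trans hR h1 h2) orbT.
Qed.

Lemma relw_refl w b a : relw w b a a. Proof. by rewrite /relw eqxx. Qed.

Definition agreeP (w : 'I_n) (b q : outcome n m) := forall j, j \in Pa N w -> q j = b j.

Lemma relw_step w b q q' : agreeP w b q -> iflip N q q' -> relw w b (q' w) (q w).
Proof.
move=> ag /existsP [i /andP [/andP [/forallP hl hi] hr]].
case: (eqVneq i w) => [ei|niw].
  subst i; rewrite /relw; case: wfN => _ hdep _ _.
  rewrite -(hdep w q b) //; by case: (cpt N w q) hr => // R ->; rewrite orbT.
have := hl w; rewrite eq_sym niw /= => /eqP ->; exact: relw_refl.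
Qed.

Lemma relw_first w b ps x : path (iflip N) x ps ->
  (forall q, q \in x :: ps -> agreeP w b q) ->
  forall q, q \in x :: ps -> relw w b (q w) (x w).
Proof.
elim: ps x => [|y ps IH] x /=.
  by move=> _ _ q; rewrite inE => /eqP ->; exact: relw_refl.
case/andP=> hxy hp ag q; rewrite inE => /orP [/eqP -> |hq]; first exact: relw_refl.
apply: relw_trans (IH y hp _ q hq) _.
  by move=> q' hq'; apply: ag; rewrite inE hq' orbT.
by apply: relw_step hxy; apply: ag; rewrite mem_head.
Qed.

Lemma relw_last w b ps x : path (iflip N) x ps ->
  (forall q, q \in x :: ps -> agreeP w b q) ->
  forall q, q \in x :: ps -> relw w b (last x ps w) (q w).
Proof.
elim: ps x => [|y ps IH] x /=.
  by move=> _ _ q; rewrite inE => /eqP ->; exact: relw_refl.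
case/andP=> hxy hp ag q; rewrite inE => /orP [/eqP -> |hq].
  apply: relw_trans (IH y hp _ y (mem_head _ _)) _.
    by move=> q' hq'; apply: ag; rewrite inE hq' orbT.
  by apply: relw_step hxy; apply: ag; rewrite mem_head.
apply: IH => // q' hq'; apply: ag; by rewrite inE hq' orbT.
Qed.

Definition anc (w : 'I_n) := [set y | connect (pa_edge N) y w].

Lemma anc_lt p w : p \in Pa N w -> #|anc p| < #|anc w|.
Proof.
move=> hp; apply: proper_card; apply/properP; split.
  apply/subsetP => y; rewrite !inE => hy; apply: connect_trans hy _.
  exact: connect1.
exists w; rewrite !inE ?connect0 //; exact: acN.
Qed.

Lemma concept_swap (x : outcome n m * outcome n m) v :
  (forall l, l != v -> x.1 l = x.2 l) -> x.1 v != x.2 v ->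
  concept N x = (if cpt N v x.2 is Some R then R (x.1 v, x.2 v) else false).
Proof.
move=> hag hne; apply/idP/idP.
  case/existsP=> o1 /andP [h1 /connectP [ps' hp' hlast]].
  set o := x.2; set ps := o1 :: ps'.
  have hpath : path (iflip N) o ps by rewrite /= h1 hp'.
  have hl : last o ps = x.1 by rewrite /= hlast.
  set F := fun w => has (fun q : outcome n m => q w != o w) (o :: ps).
  have claim : forall w, F w -> (forall p, p \in Pa N w -> ~~ F p) -> w = v.
    move=> w /hasP [q hq hqw] hpa.
    have ag : forall q, q \in o :: ps -> agreeP w o q.
      move=> q' hq' j hj; have := hpa j hj; move/hasPn => /(_ q' hq').
      by rewrite negbK => /eqP.
    have r1 := relw_first hpath ag hq.
    have r2 := relw_last hpath ag hq.
    move: r1 r2; rewrite /relw (negbTE hqw) /=.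
    case E: (cpt N w o) => [R|] // hR1 hr2.
    case: wfN => _ _ hst _; have hR := hst _ _ _ E.
    have hR2 : R (last o ps w, o w).
      case/orP: hr2 => [/eqP -> //|h]; exact: st_trans h hR1.
    move: hR2; rewrite hl => hR2; apply/eqP; apply: contraLR hR2 => hwv.
    by rewrite hag // (st_irr hR).
  have hpv : forall p, p \in Pa N v -> ~~ F p.
    move=> p hp; apply/negP => Fp.
    set P := [pred w | F w && connect (pa_edge N) w p].
    have Pp : P p by rewrite /P /= Fp connect0.
    case: (arg_minnP (fun w => #|anc w|) Pp) => w /andP [Fw cwp] wmin.
    have ewv : w = v.
      apply: claim => // p' hpp'; apply/negP => Fp'.
      have : P p'.
        rewrite /P /= Fp' /=; apply: connect_trans cwp; exact: connect1.
      move/wmin; rewrite leqNgt; by rewrite (anc_lt hpp').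
    subst w; move: (acN hp); by rewrite cwp.
  have ag : forall q, q \in o :: ps -> agreeP v o q.
    move=> q' hq' j hj; have := hpv j hj; move/hasPn => /(_ q' hq').
    by rewrite negbK => /eqP.
  have := relw_first hpath ag (mem_last o ps); rewrite hl /relw (negbTE hne) /=.
  done.
case E: (cpt N v x.2) => [R|] // hR.
apply/existsP; exists x.1; rewrite connect0 andbT.
apply/existsP; exists v; rewrite E hR andbT eq_sym hne andbT.
by apply/forallP => l; apply/implyP => hl; rewrite hag.
Qed.

End Concept.
Section Dep.
Local Open Scope ring_scope.
Lemma dep_exists (X J : finType) (S : {set X}) (JJ : {set J}) (M : X -> J -> rat) :
  (#|JJ| < #|S|)%N -> exists u : X -> rat,
    [/\ (forall x, x \notin S -> u x = 0), (exists x, u x != 0) &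
        forall j, j \in JJ -> \sum_x u x * M x j = 0].
Proof.
move=> hlt.
have [x0 x0S] : exists x0, x0 \in S.
  by apply/set0Pn; rewrite -card_gt0; apply: leq_ltn_trans hlt.
pose A : 'M[rat]_(#|S|, #|JJ|) := \matrix_(i, j) M (enum_val i) (enum_val j).
have hk : kermx A != 0.
  rewrite -mxrank_eq0 mxrank_ker subn_eq0 -ltnNge.
  exact: leq_ltn_trans (rank_leq_col A) _.
have [i hi] : exists i, row i (kermx A) != 0.
  apply/existsP; apply: contraR hk => /existsPn h; apply/eqP/row_matrixP => i.
  by rewrite row0; apply/eqP; move: (h i); rewrite negbK.
set w := row i (kermx A).
have hw : w *m A = 0 by rewrite /w -row_mul mulmx_ker row0.
exists (fun x => if x \in S then w 0 (enum_rank_in x0S x) else 0); split.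
- by move=> x /negbTE ->.
- have [k hk'] : exists k, w 0 k != 0.
    apply/existsP; apply: contraR hi => /existsPn h; apply/eqP/rowP => k.
    by rewrite [RHS]mxE; move: (h k); rewrite negbK => /eqP.
  exists (enum_val k); by rewrite enum_valP enum_valK_in.
- move=> j jJ.
  rewrite (_ : \sum_x _ = \sum_(x in S) w 0 (enum_rank_in x0S x) * M x j); last first.
    by rewrite [RHS]big_mkcond; apply: eq_bigr => x _; case: ifP => _; rewrite ?mul0r.
  rewrite big_enum_val /=.
  have h := congr1 (fun B : 'rV_#|JJ| => B 0 (enum_rank_in jJ j)) hw.
  rewrite /= !mxE in h.
  transitivity (\sum_k w 0 k * A k (enum_rank_in jJ j)); last by [].
  apply: eq_bigr => k _.
  by rewrite enum_valK_in !mxE enum_rankK_in.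
Qed.

Lemma dep_func (X J : finType) (S : {set X}) (JJ : {set J}) (M : X -> J -> rat) :
  (#|JJ| < #|S|)%N -> exists u : X -> rat,
    [/\ (forall x, x \notin S -> u x = 0), (exists x, u x != 0) &
        forall g : J -> rat, (forall j, j \notin JJ -> g j = 0) ->
          \sum_x u x * (\sum_j g j * M x j) = 0].
Proof.
move=> hlt; have [u [h1 h2 h3]] := dep_exists M hlt; exists u; split=> // g hg.
under eq_bigr => x _ do rewrite mulr_sumr.
rewrite exchange_big /=; apply: big1 => j _.
case: (boolP (j \in JJ)) => hj.
  transitivity (g j * \sum_x u x * M x j); last by rewrite h3 // mulr0.
  by rewrite mulr_sumr; apply: eq_bigr => x _; rewrite mulrCA.
by rewrite big1 // => x _; rewrite hg ?mul0r ?mulr0.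
Qed.
End Dep.
Section Swap.
Variables n m : nat.
Definition flips (x : outcome n m * outcome n m) (v : 'I_n) :=
  [forall l, (l != v) ==> (x.1 l == x.2 l)] && (x.1 v != x.2 v).

Lemma flipsP x v : flips x v -> (forall l, l != v -> x.1 l = x.2 l) /\ x.1 v != x.2 v.
Proof. by case/andP=> /forallP h ->; split=> // l hl; move: (h l); rewrite hl => /eqP. Qed.

Lemma swap_flips x : is_swap x -> exists v, flips x v.
Proof.
case/cards1P=> v hv; exists v; apply/andP; split.
  apply/forallP=> l; apply/implyP=> hl; apply: contraR hl => hl.
  have : l \in [set i | x.1 i != x.2 i] by rewrite inE.
  by rewrite hv inE.
have : v \in [set i | x.1 i != x.2 i] by rewrite hv inE.
by rewrite inE.
Qed.

Lemma flips_uniq x v w : flips x v -> flips x w -> v = w.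
Proof.
move=> /flipsP [h1 _] /flipsP [_ h2]; apply/eqP; apply: contraR h2 => hne.
by rewrite h1 // eq_sym.
Qed.
End Swap.
Section Misc.
Local Open Scope ring_scope.
Lemma sum_ind (T : finType) (g : T -> rat) a : \sum_j g j * (a == j)%:R = g a.
Proof.
rewrite (bigD1 a) //= eqxx mulr1 big1 ?addr0 // => j hj.
by rewrite eq_sym (negbTE hj) mulr0.
Qed.
End Misc.


Section Core.
Variables n m : nat.
Local Open Scope ring_scope.
Notation X := (outcome n m * outcome n m)%type.
Definition sgf (u : X -> rat) (v : 'I_n) : rat :=
  if [forall x, ((u x != 0) && flips x v) ==> (u x < 0)] then -1 else 1.
Definition Tset (S : {set X}) (u : X -> rat) :=
  [set x in S | (u x != 0) && [exists v, flips x v && (0 < sgf u v * u x)]].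

Lemma UB_core (S : {set X}) (u : X -> rat) (N : cpnet n m) v x1 :
  {subset S <= is_swap (m:=m)} -> wf_cpnet N -> acyclic N ->
  (forall x, u x != 0 -> x \in S) ->
  (forall x, x \in S -> concept N x = (x \in Tset S u)) ->
  u x1 != 0 -> flips x1 v ->
  (forall x, u x != 0 -> flips x v -> cpt N v x.2 = cpt N v x1.2) ->
  (forall rho : 'I_m -> rat, \sum_x u x * (rho (x.1 v) - rho (x.2 v)) = 0) -> False.
Proof.
move=> hsw wfN acN uS hN hx1 fx1 cptx hf.
have concx : forall x, u x != 0 -> flips x v ->
    concept N x = (if cpt N v x1.2 is Some R then R (x.1 v, x.2 v) else false).
  move=> x hx fx; case/flipsP: fx => h1 h2.
  by rewrite (concept_swap wfN acN h1 h2) cptx // /flips h2 andbT; apply/forallP => l; apply/implyP => hl; rewrite h1.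
have inT : forall x, u x != 0 -> flips x v -> (x \in Tset S u) = (0 < sgf u v * u x).
  move=> x hx fx; rewrite inE uS //= hx /=.
  apply/existsP/idP => [[w /andP [fw hw]]|h]; last by exists v; rewrite fx h.
  by rewrite (flips_uniq fx fw).
have [x2 [hx2 fx2 px2]] : exists x2, [/\ u x2 != 0, flips x2 v & 0 < sgf u v * u x2].
  case: (boolP ([forall x, ((u x != 0) && flips x v) ==> (u x < 0)])) => han.
    exists x1; split=> //; rewrite /sgf han mulN1r oppr_gt0.
    by move/forallP: han => /(_ x1); rewrite hx1 fx1.
  move/forallPn: (han) => [x]; rewrite negb_imply => /andP [/andP [hx fx] hneg].
  exists x; split=> //; rewrite /sgf (negbTE han) mul1r.
  by rewrite lt0r hx /= leNgt.
have [R hR] : exists R, cpt N v x1.2 = Some R.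
  have := hN x2 (uS _ hx2); rewrite concx // inT // px2.
  by case: (cpt N v x1.2) => [R _|//]; exists R.
have hRst : strict_total R by case: wfN => _ _ hst _; exact: hst hR.
pose rho (a : 'I_m) : rat := (rk R a)%:R.
pose F x := sgf u v * u x * (rho (x.1 v) - rho (x.2 v)).
have hsum : \sum_x F x = 0.
  have h := hf rho.
  transitivity (sgf u v * \sum_x u x * (rho (x.1 v) - rho (x.2 v))).
    by rewrite mulr_sumr; apply: eq_bigr => x _; rewrite /F mulrA.
  by rewrite h mulr0.
have sgnz : sgf u v != 0 by rewrite /sgf; case: ifP => _; rewrite ?oppr_eq0 oner_eq0.
have Fgt : forall x, u x != 0 -> flips x v -> 0 < F x.
  move=> x hx fx; have hc := hN x (uS _ hx); rewrite concx // hR inT // in hc.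
  case/flipsP: (fx) => _ hne.
  case: (boolP (0 < sgf u v * u x)) => hp.
    rewrite hp in hc; apply: mulr_gt0 hp _; rewrite subr_gt0 ltr_nat.
    by move: (rk_lt hRst hc).
  have hneg : sgf u v * u x < 0.
    by rewrite lt_neqAle mulf_eq0 negb_or sgnz hx /= leNgt.
  rewrite (negbTE hp) in hc.
  have hc' : R (x.2 v, x.1 v) by move: (st_tot hRst hne); rewrite hc.
  rewrite /F (nmulr_rgt0 _ hneg) subr_lt0 ltr_nat.
  by move: (rk_lt hRst hc').
have Fpos : forall x, 0 <= F x.
  move=> x; case: (eqVneq (u x) 0) => [hx0'|hx]; first by rewrite /F hx0' mulr0 mul0r.
  have [w fw] := swap_flips (hsw _ (uS _ hx)).
  case: (eqVneq w v) => [ewv|nwv].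
    by subst w; apply: ltW; apply: Fgt.
  rewrite /F; have -> : x.1 v = x.2 v by case/flipsP: fw => h _; apply: h; rewrite eq_sym.
  by rewrite subrr mulr0.
have := @psumr_eq0P _ _ xpredT F (fun x _ => Fpos x) hsum x2 isT.
by move/eqP; rewrite gt_eqF // Fgt.
Qed.
End Core.

Section UB1.
Variables n m : nat.
Variable z : 'I_m.
Variable C : cpnet n m -> Prop.
Hypothesis hC : forall N, C N -> wf_cpnet N /\ acyclic N.
Local Open Scope ring_scope.

Notation X := (outcome n m * outcome n m)%type.

Definition Dep (S : {set X}) (u : X -> rat) :=
  (forall x, x \notin S -> u x = 0) /\
  forall f : outcome n m -> rat, \sum_x u x * (f x.1 - f x.2) = 0.

Lemma UB_main S : shattered C S -> forall k (u : X -> rat), #|[set x | u x != 0]| = k ->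
  Dep S u -> (exists x, u x != 0) -> False.
Proof.
case=> hsw hsh k; elim/ltn_ind: k => k IH u hk [hS hf] [x0 hx0].
have [N [CN hN]] : exists N, C N /\ forall x, x \in S -> concept N x = (x \in Tset S u).
  by apply: hsh; apply/subsetP => x; rewrite inE => /andP [].
have [wfN acN] := hC CN.
have uS : forall x, u x != 0 -> x \in S.
  by move=> x hx; apply: contraR hx => /hS ->.
pose VC := [set v | [exists x, (u x != 0) && flips x v]].
have [v0 hv0] := swap_flips (hsw _ (uS _ hx0)).
have v0VC : v0 \in VC by rewrite inE; apply/existsP; exists x0; rewrite hx0.
case: (arg_minnP (fun v => #|anc N v|) v0VC) => v vVC vmin.
have hPa : forall p, p \in Pa N v -> p \notin VC.
  move=> p hp; apply/negP => /vmin; rewrite leqNgt.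
  by rewrite (anc_lt acN hp).
have [x1 /andP [hx1 fx1]] : exists x1, (u x1 != 0) && flips x1 v.
  by have : v \in VC := vVC; rewrite inE => /existsP.
have agx : forall x, u x != 0 -> forall p, p \in Pa N v -> x.1 p = x.2 p.
  move=> x hx p hp; have [w hw] := swap_flips (hsw _ (uS _ hx)).
  have wVC : w \in VC by rewrite inE; apply/existsP; exists x; rewrite hx.
  case/flipsP: hw => h _; apply: h; apply: contraNneq (hPa p hp) => ->; done.
pose agQ (o : outcome n m) := [forall p in Pa N v, o p == x1.2 p].
have agQall : forall x, u x != 0 -> agQ x.2.
  move=> x hx; case: (boolP (agQ x.2)) => // hna; exfalso.
  pose u' x := if agQ x.2 then u x else 0.
  have sub : [set x | u' x != 0] \subset [set x | u x != 0].
    by apply/subsetP => y; rewrite !inE /u'; case: ifP => //; rewrite eqxx.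
  have Du' : Dep S u'.
    split; first by move=> y hy; rewrite /u' hS // if_same.
    move=> f; pose g o := if agQ o then f o else 0.
    rewrite -[RHS](hf g); apply: eq_bigr => y _; rewrite /u' /g.
    case: (eqVneq (u y) 0) => [->|hy]; first by rewrite if_same !mul0r.
    have -> : agQ y.1 = agQ y.2.
      by apply: eq_forallb_in => p hp; rewrite agx.
    by case: ifP => _; rewrite ?mul0r // subrr mulr0.
  have nz : exists y, u' y != 0 by exists x1; rewrite /u'; case: ifP => // /negP; 
     rewrite /agQ; move=> h; exfalso; apply: h; apply/forall_inP => p _.
  case: (ltnP #|[set x | u' x != 0]| k) => hlt.
    exact: IH hlt u' erefl Du' nz.
  have e : [set x | u' x != 0] = [set x | u x != 0].
    apply/eqP; rewrite eqEcard sub /= hk //.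
  have : x \in [set x | u x != 0] by rewrite inE.
  by rewrite -e inE /u' (negbTE hna) eqxx => /negP.
have cptx : forall x, u x != 0 -> cpt N v x.2 = cpt N v x1.2.
  move=> x hx; case: wfN => _ hdep _ _; apply: hdep => p hp.
  by have := agQall x hx; move/forall_inP => /(_ p hp) /eqP.
apply: (UB_core hsw wfN acN uS hN hx1 fx1).
  by move=> x hx _; apply: cptx.
by move=> rho; apply: (hf (fun o => rho (o v))).
Qed.
Lemma UB1 S : shattered C S -> (#|S| <= m ^ n - 1)%N.
Proof.
move=> hsh; rewrite leqNgt; apply/negP => hlt.
pose ostar : outcome n m := [ffun _ => z].
have hc : (#|[set~ ostar]| < #|S|)%N.
  by rewrite cardsC1 card_ffun !card_ord -subn1.
have [u [h1 h2 h3]] := dep_func (fun (x : X) (o : outcome n m) => (x.1 == o)%:R - (x.2 == o)%:R) hc.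
apply: (UB_main hsh erefl (u:=u)) => //; split => // f.
have hg : forall j, j \notin [set~ ostar] -> (fun o => f o - f ostar) j = 0.
  by move=> j; rewrite !inE negbK => /eqP ->; rewrite subrr.
rewrite -[RHS](h3 _ hg) /=; apply: eq_bigr => x _; congr (_ * _).
rewrite (eq_bigr (fun j => (f j - f ostar) * (x.1 == j)%:R - (f j - f ostar) * (x.2 == j)%:R)); last by move=> j _; rewrite mulrBr.
by rewrite sumrB !sum_ind opprB addrA subrK.
Qed.
End UB1.

Section UB0.
Variables n m : nat.
Variable z : 'I_m.
Variable C : cpnet n m -> Prop.
Hypothesis hC : forall N, C N -> [/\ wf_cpnet N, acyclic N & forall i, Pa N i = set0].
Local Open Scope ring_scope.
Notation X := (outcome n m * outcome n m)%type.

Lemma UB0 S : shattered C S -> (#|S| <= (m - 1) * n)%N.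
Proof.
case=> hsw hsh; rewrite leqNgt; apply/negP => hlt.
pose JJ := [set p : 'I_n * 'I_m | p.2 != z].
have hc : (#|JJ| < #|S|)%N.
  have -> : JJ = setX [set: 'I_n] [set~ z] by apply/setP => p; rewrite !inE.
  by rewrite cardsX cardsT cardsC1 !card_ord mulnC -subn1.
have [u [h1 [x0 hx0] h3]] := dep_func (fun (x : X) (p : 'I_n * 'I_m) => (x.1 p.1 == p.2)%:R - (x.2 p.1 == p.2)%:R) hc.
have uS : forall x, u x != 0 -> x \in S.
  by move=> x hx; apply: contraR hx => /h1 ->.
have [N [CN hN]] : exists N, C N /\ forall x, x \in S -> concept N x = (x \in Tset S u).
  by apply: hsh; apply/subsetP => x; rewrite inE => /andP [].
have [wfN acN hPa] := hC CN.
have [v fx0] := swap_flips (hsw _ (uS _ hx0)).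
apply: (UB_core hsw wfN acN uS hN hx0 fx0).
  move=> x _ _; case: wfN => _ hdep _ _; apply: hdep => p; by rewrite hPa inE.
move=> rho.
pose g (p : 'I_n * 'I_m) := (p.1 == v)%:R * (rho p.2 - rho z).
have hg : forall p, p \notin JJ -> g p = 0.
  by move=> p; rewrite inE negbK => /eqP e; rewrite /g e subrr mulr0.
rewrite -[RHS](h3 g hg); apply: eq_bigr => x _; congr (_ * _).
rewrite -(pair_bigA _ (fun w a => g (w, a) * ((x.1 w == a)%:R - (x.2 w == a)%:R))) /=.
rewrite (bigD1 v) //= [X in _ = _ + X]big1 ?addr0; last first.
  by move=> w hw; apply: big1 => a _; rewrite /g /= (negbTE hw) mul0r mul0r.
rewrite (eq_bigr (fun a => (rho a - rho z) * (x.1 v == a)%:R - (rho a - rho z) * (x.2 v == a)%:R)); last first.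
  by move=> a _; rewrite /g /= eqxx mul1r mulrBr.
by rewrite sumrB !(sum_ind (fun a => rho a - rho z)) opprB addrA subrK.
Qed.
End UB0.
Section Ess.
Variables n m : nat.
Variable Y : eqType.
Definition ess (f : outcome n m -> Y) : {set 'I_n} :=
  [set l | [exists o : outcome n m, exists o' : outcome n m, [forall l', (l' != l) ==> (o l' == o' l')] && (f o != f o')]].

Lemma ess_dep (f : outcome n m -> Y) (o o' : outcome n m) :
  (forall l, l \in ess f -> o l = o' l) -> f o = f o'.
Proof.
move: {2}#|[set l | o l != o' l]| (erefl #|[set l | o l != o' l]|) => d.
elim: d o => [|d IH] o hd hag.
  have -> : o = o'; last by [].
  apply/ffunP => l; apply/eqP; apply: contraT => hl.
  have : l \in [set l | o l != o' l] by rewrite inE.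
  move=> hl'; have : (0 < #|[set l | o l != o' l]|)%N by apply/card_gt0P; exists l.
  by rewrite hd.
have [l hl] : exists l, l \in [set l | o l != o' l].
  by apply/set0Pn; rewrite -card_gt0 hd.
have lnE : l \notin ess f.
  by apply/negP => /hag e; move: hl; rewrite inE e eqxx.
pose o'' : outcome n m := [ffun l' => if l' == l then o' l else o l'].
have e1 : f o = f o''.
  apply/eqP; apply: contraNT lnE => hne; rewrite inE; apply/existsP; exists o.
  apply/existsP; exists o''; rewrite hne andbT; apply/forallP => l'.
  by apply/implyP => hl'; rewrite ffunE (negbTE hl').
rewrite e1; apply: IH.
  have -> : [set l0 | o'' l0 != o' l0] = [set l0 | o l0 != o' l0] :\ l.
    apply/setP => l'; rewrite !inE ffunE; case: (eqVneq l' l) => //= ->.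
    by rewrite eqxx.
  by move: (cardsD1 l [set l0 | o l0 != o' l0]); rewrite hl hd add1n => [[]].
move=> l' hl'; rewrite ffunE; case: (eqVneq l' l) => [->//|_]; exact: hag.
Qed.
End Ess.

Section LB.
Variables n m k : nat.
Variable z : 'I_m.
Notation X := (outcome n m * outcome n m)%type.

Definition setj (j : 'I_n) (o : outcome n m) (a : 'I_m) : outcome n m :=
  [ffun l : 'I_n => if l == j then a else o l].
Definition Fam (j : 'I_n) : {set outcome n m} :=
  [set o : outcome n m | (o j != z) && [forall l, ((l != j) && (minn j k <= l)) ==> (o l == z)]].
Definition Sj (j : 'I_n) : {set X} := [set (o, setj j o z) | o in Fam j].
Definition SS : {set X} := \bigcup_(j : 'I_n) Sj j.

Definition ctx (j : 'I_n) (o : outcome n m) : outcome n m :=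
  [ffun l : 'I_n => if l < minn j k then o l else z].
Definition key (A : {set 'I_m}) (a : 'I_m) : nat :=
  (if a == z then 1 else if a \in A then 2 else 0) * m + a.
Definition ordA (A : {set 'I_m}) : domrel m := [ffun p => key A p.2 < key A p.1].
Definition AT (T : {set X}) j o : {set 'I_m} :=
  [set a | (setj j (ctx j o) a, ctx j o) \in T].
Definition raw (T : {set X}) j o : option (domrel m) := Some (ordA (AT T j o)).
Definition netT (T : {set X}) : cpnet n m := CPNet (fun j => ess (raw T j)) (raw T).

Lemma key_inj A : injective (key A).
Proof.
move=> a b /(congr1 (fun x => x %% m)); rewrite /key !modnMDl !modn_small //.
by move/val_inj.
Qed.

Lemma ordA_st A : strict_total (ordA A).
Proof.
split.
- by move=> x; rewrite ffunE ltnn.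
- by move=> x y w; rewrite !ffunE /= => h1 h2; exact: ltn_trans h2 h1.
- move=> x y hxy; rewrite !ffunE /=; have : key A x != key A y.
    by apply: contra hxy => /eqP /key_inj ->.
  by rewrite neq_ltn orbC.
Qed.

Lemma ordA_z A a : a != z -> ordA A (a, z) = (a \in A).
Proof.
move=> haz; rewrite ffunE /key /= eqxx (negbTE haz).
have := ltn_ord z; have := ltn_ord a.
by case: (a \in A) => /=; lia.
Qed.

Lemma ess_raw T j l : l \in ess (raw T j) -> l < minn j k.
Proof.
rewrite inE => /existsP [o /existsP [o' /andP [/forallP hag hne]]].
case: (ltnP l (minn j k)) => // hl; exfalso; move/eqP: hne; apply.
suff e : ctx j o = ctx j o' by rewrite /raw /AT e.
apply/ffunP => l'; rewrite !ffunE; case: ifP => // hl'.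
have : l' != l by apply: contraTneq hl' => ->; rewrite ltnNge hl.
by move: (hag l') => /implyP h /h /eqP.
Qed.

Lemma netT_wf T : wf_cpnet (netT T).
Proof.
split => /=.
- move=> i; apply/negP => /ess_raw; rewrite ltnNge; by rewrite geq_minl.
- by move=> i o o' h; apply: ess_dep.
- by move=> i o r [<-]; exact: ordA_st.
- move=> i j; rewrite inE => /existsP [o /existsP [o' /andP [/forallP hag hne]]].
  exists o, o'; split; last by apply/eqP.
  by move=> l hl; move: (hag l); rewrite hl => /eqP.
Qed.

Lemma connect_le (e : rel 'I_n) a b : (forall x y, e x y -> x < y) -> connect e a b -> a <= b.
Proof.
move=> he /connectP [p hp ->]; elim: p a hp => //= c p IH a /andP [hac hp].
exact: leq_trans (ltnW (he _ _ hac)) (IH _ hp).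
Qed.

Lemma netT_acyclic T : acyclic (netT T).
Proof.
have he : forall x y, pa_edge (netT T) x y -> x < y.
  move=> x y /ess_raw h; exact: leq_trans h (geq_minl _ _).
move=> i j /he hji; apply/negP => /(connect_le he); by rewrite leqNgt hji.
Qed.

Lemma card_lt c : c <= n -> #|[set l : 'I_n | l < c]| = c.
Proof.
move=> hc; have -> : [set l : 'I_n | l < c] = [set widen_ord hc i | i in 'I_c].
  apply/setP => l; rewrite inE; apply/idP/imsetP => [hl|[i _ ->]]; last by case: i.
  by exists (Ordinal hl) => //; apply: val_inj.
rewrite card_imset ?card_ord //.
move=> a b /(congr1 val) /= e; exact: val_inj e.
Qed.

Lemma netT_kb T : kbounded k (netT T).
Proof.
move=> i /=; have hc : minn i k <= n by apply: leq_trans (geq_minl _ _) (ltnW (ltn_ord i)).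
apply: leq_trans (geq_minr i k); rewrite -(card_lt hc).
by apply: subset_leq_card; apply/subsetP => l /ess_raw; rewrite inE.
Qed.

Lemma Sj_flips j x : x \in Sj j -> flips x j.
Proof.
case/imsetP => o ho ->; rewrite /flips /=; apply/andP; split.
  by apply/forallP => l; apply/implyP => hl; rewrite ffunE (negbTE hl).
by rewrite ffunE eqxx; move: ho; rewrite inE => /andP [].
Qed.

Lemma SS_swap x : x \in SS -> is_swap x.
Proof.
case/bigcupP => j _ /Sj_flips /flipsP [h1 h2]; apply/cards1P; exists j.
apply/setP => l; rewrite !inE; case: (eqVneq l j) => [->|hl]; first by rewrite h2.
by rewrite h1 // eqxx.
Qed.

Lemma ctx_setj j o : o \in Fam j -> ctx j (setj j o z) = setj j o z.
Proof.
rewrite inE => /andP [_ /forallP h]; apply/ffunP => l; rewrite !ffunE.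
case: ifP => // hl; case: (eqVneq l j) => // hlj.
by move: (h l); rewrite hlj leqNgt hl /= => /eqP.
Qed.

Lemma concept_netT T x : x \in SS -> concept (netT T) x = (x \in T).
Proof.
case/bigcupP => j _ hx; have fx := Sj_flips hx; case/flipsP: fx => h1 h2.
rewrite (concept_swap (netT_wf T) (@netT_acyclic T) h1 h2) /=.
case/imsetP: hx h1 h2 => o ho -> /= h1 h2.
have hoz : o j != z by move: ho; rewrite inE => /andP [].
rewrite /raw [setj j o z j]ffunE eqxx ordA_z // inE ctx_setj //.
have -> : setj j (setj j o z) (o j) = o.
  by apply/ffunP => l; rewrite !ffunE; case: (eqVneq l j) => [->|].
done.
Qed.

Lemma LB_shatter : shattered (@acyclic_kbounded n m k) SS.
Proof.
split; first by move=> x /SS_swap.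
move=> T hT; exists (netT T); split; first by split; [exact: netT_wf|exact: netT_acyclic|exact: netT_kb].
move=> x hx; exact: concept_netT.
Qed.

Lemma card_Fam j : #|Fam j| = (m - 1) * m ^ (minn j k).
Proof.
pose F (l : 'I_n) := if l == j then [set~ z] else if l < minn j k then [set: 'I_m] else [set z].
have -> : Fam j = [set o : outcome n m | [forall l, o l \in F l]].
  apply/setP => o; rewrite !inE; apply/andP/forallP => [[hj /forallP h] l|h].
    rewrite /F; case: (eqVneq l j) => [->|hl]; first by rewrite !inE.
    case: ifP => hlt; first by rewrite inE.
    by move: (h l); rewrite hl leqNgt hlt /= inE.
  split; first by move: (h j); rewrite /F eqxx !inE.
  apply/forallP => l; apply/implyP => /andP [hl hle]; move: (h l).
  by rewrite /F (negbTE hl) ltnNge hle /= inE.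
have -> : [set o : outcome n m | [forall l, o l \in F l]] =
    [set o in family (fun l : 'I_n => [pred a : 'I_m | a \in F l])].
  by apply/setP => o; rewrite inE.
rewrite cardsE card_family foldrE big_map big_enum /=.
rewrite (bigD1 j) //= {1}/F eqxx cardsC1 card_ord subn1.
congr (_ * _).
transitivity (\prod_(i < n | (i != j) && (i < minn j k)) m).
  rewrite big_mkcondr /=; apply: eq_bigr => i hi.
  transitivity #|F i|; first by apply: eq_card.
  rewrite /F (negbTE hi); case: ifP => _; first by rewrite cardsT card_ord.
  by rewrite cards1.
rewrite (eq_bigl (fun i => i \in [set i : 'I_n | i < minn j k])); last first.
  move=> i; rewrite inE; case: ltnP => h; rewrite ?andbT ?andbF //.
  apply: contraTneq h => ->; rewrite -leqNgt; exact: geq_minl.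
rewrite prod_nat_const card_lt //.
exact: leq_trans (geq_minl _ _) (ltnW (ltn_ord j)).
Qed.

Lemma card_SS : #|SS| = \sum_(j < n) (m - 1) * m ^ (minn j k).
Proof.
have cS : forall j, #|Sj j| = (m - 1) * m ^ (minn j k).
  move=> j; rewrite card_imset ?card_Fam //.
  by move=> a b /(congr1 fst).
under eq_bigr => j _ do rewrite -cS -sum1_card big_mkcond /=.
rewrite exchange_big /= -sum1_card big_mkcond /=; apply: eq_bigr => x _.
case: ifP => hx.
  case/bigcupP: hx => j _ hj; rewrite (bigD1 j) //= hj big1 // => j' hj'.
  case: ifP => // hj2; exfalso; move/eqP: hj'; apply.
  exact: flips_uniq (Sj_flips hj2) (Sj_flips hj).
rewrite big1 // => j _; case: ifP => // hj; exfalso; move/negP: hx; apply.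
by apply/bigcupP; exists j.
Qed.

End LB.

Lemma sum_minn n m k : k <= n -> 0 < m - 1 ->
  \sum_(j < n) (m - 1) * m ^ (minn j k) = (m - 1) * Mk n m k.
Proof.
move=> hk hm.
rewrite -big_distrr /=; congr (_ * _).
rewrite -(big_mkord xpredT (fun j => m ^ minn j k)) (@big_cat_nat _ _ _ k 0 n) //  /=.
rewrite /Mk addnC; congr (_ + _).
  rewrite -sum_nat_const_nat; apply: eq_big_nat => i /andP [hi _].
  by rewrite (minn_idPr hi).
have -> : m ^ k - 1 = (m - 1) * \sum_(i < k) m ^ i by rewrite !subn1 predn_exp.
rewrite mulKn // -(big_mkord xpredT (fun i => m ^ i)); apply: eq_big_nat => i /andP [_ hi].
by rewrite (minn_idPl (ltnW hi)).
Qed.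
Theorem corollary1 (n m k : nat) :
  1 <= n -> 2 <= m -> k <= n - 1 ->
  [/\ VCD_is (@acyclic_kbounded n m (n - 1)) (m ^ n - 1),
      VCD_is (@acyclic_kbounded n m 0) ((m - 1) * n)
    & VCD_ge (@acyclic_kbounded n m k) ((m - 1) * Mk n m k)].
Proof.
move=> hn hm hk.
have m0 : 0 < m by apply: leq_trans hm.
pose z : 'I_m := Ordinal m0.
have hm1 : 0 < m - 1 by rewrite subn_gt0.
have LB : forall kk, kk <= n -> #|@SS n m kk z| = (m - 1) * Mk n m kk.
  by move=> kk hkk; rewrite card_SS sum_minn.
have hn1 : n - 1 <= n by apply: leq_subr.
split.
- split.
    exists (@SS n m (n - 1) z); split; first exact: LB_shatter.
    rewrite LB // /Mk.
    have e1 : n - (n - 1) = 1 by lia.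
    set M := m ^ (n - 1).
    have hd : (m - 1) %| (M - 1) by rewrite !subn1 predn_exp dvdn_mulr.
    have eM : m ^ n = m * M by rewrite /M -expnS; congr (_ ^ _); lia.
    have M1 : 0 < M by rewrite expn_gt0 m0.
    rewrite e1 mul1n mulnDr [X in _ + X]mulnC divnK // eM; nia.
  move=> S hS; apply: (UB1 z _ hS) => N; by case.
- split.
    exists (@SS n m 0 z); split; first exact: LB_shatter.
    by rewrite LB // /Mk subn0 expn0 muln1 subnn div0n addn0.
  move=> S hS; apply: (UB0 z _ hS) => N [wfN acN kbN]; split => // i.
  by apply/cards0_eq; apply/eqP; rewrite -leqn0; apply: kbN.
- exists (@SS n m k z); split; first exact: LB_shatter.
  rewrite LB //; apply: leq_trans hk _; exact: leq_subr.
Qed.
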